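(* Let $G=(N,T,F,P,S)$ be a grounded indexed grammar, $D$ a derivation tree of $G$ (with some set of marked positions of its yield), and let $R$ be the set of $3$-tuples $(\tau_1,\tau_2,\tau_3)$ of pairwise disjoint subsets of $N$ with union $N$. For every $W\subseteq N\times N\times R$, every limited controlled descent in $D$ which respects $W$ has at most $(|N|\cdot 3^{|N|})^{|W|+1}$ splits.
   Context: An indexed grammar $G=(N,T,F,P,S)$ has finite alphabets $N$ (nonterminals), $T$ (terminals), $F$ (stack symbols), start symbol $S$, and productions of the forms $A\to r$, $A\to Bf$, $Af\to r$ ($A,B\in N$, $f\in F$, $r\in(N\cup T)^*$); nonterminals carry stacks $x\in F^*$ (written $Ax$, top first); applying $A\to r$ to $Ax$ gives $r$ with each nonterminal $C$ replaced by $Cx$; $A\to Bf$ turns $Ax$ into $Bfx$; $Af\to r$ turns $Afy$ into $r$ with each nonterminal $C$ replaced by $Cy$. $G$ is grounded if there is $\$\in F$ such that all productions have the forms $S\to A\$$, $A\to r$, $A\to Bf$, $Af\to r$, $A\$\to s$ with $A,B\in N\setminus\{S\}$, $f\in F\setminus\{\$\}$, $r\in(N\setminus\{S\})^+$, $s\in T^*$. A derivation tree is an ordered tree with root labelled $S$ (empty stack), internal nodes labelled in $NF^*$, leaves labelled in $T^*$, where the children of each internal node are obtained from its label by one production (a production $A\$\to s'$ yields a single leaf labelled $s'$); its yield is the concatenation of leaf labels. Marking: a leaf is marked if its label contains a marked position of the yield; an internal node is marked if it has a marked descendant; a branch node is a node with more than one marked child. For an internal node $v$ labelled $Ax$: $\sigma(v)=A$,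 $\eta(v)=|x|$; $v'$ is in the scope of $v$ iff $v'$ is internal and there is a downward path from $v$ to $v'$ all of whose nodes $v''$ (including $v'$) satisfy $\eta(v'')\ge \eta(v)$; $\beta(v)$ is the set of nodes in the scope of $v$ none of whose children is in the scope of $v$; $\tau(v)=(\tau_1,\tau_2,\tau_3)\in R$ with $\tau_1=\{A:\sigma(v')\ne A\ \forall v'\in\beta(v)\}$, $\tau_2=\{A:\exists v'\in\beta(v),\sigma(v')=A$, and no marked $v'\in\beta(v)$ has $\sigma(v')=A\}$, $\tau_3=\{A:\exists$ marked $v'\in\beta(v)$ with $\sigma(v')=A\}$. A descent is a list of internal nodes $H=(v_0,\dots,v_m)$, $m\ge0$, with $v_m\in\beta(v_0)$ and each $v_i$ ($i\ge1$) a (not necessarily immediate) descendant of $v_{i-1}$; it is controlled if each $v_i$ ($i\ge 1$) is a child of $v_{i-1}$. For $0\le i<m$ there is a split between $i$ and $i+1$ iff some node on the tree path from $v_i$ (inclusive) to $v_{i+1}$ (exclusive) is a branch node; the number of splits of $H$ is the number of such $i$. $H$ is limited iff for all $0\le b_1<t_1<t_2\le b_2\le m$ with $\sigma(v_{b_1})=\sigma(v_{t_1})$, $\sigma(v_{t_2})=\sigma(v_{b_2})$, $v_{b_2}\in\beta(v_{b_1})$, $v_{t_2}\in\beta(v_{t_1})$ and $\tau(v_{b_1})=\tau(v_{t_1})$, there is no split between $i$ and $i+1$ for any $b_1\le i<t_1$ or $t_2\le i<b_2$. $H$ respects $W$ iff for all $0\le i<j\le m$ with $v_j\in\beta(v_i)$,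 the triple $(\sigma(v_i),\sigma(v_j),\tau(v_i))$ lies in $W$. *)

(* Defs.v *)
From mathcomp Require Import all_boot all_order.
From mathcomp Require Import boolp.
Set Implicit Arguments. Unset Strict Implicit. Unset Printing Implicit Defensive.

(*   rules : productions  A -> r      (r in (N u T)^* )                *)
(*   push  : productions  A -> B f                                     *)
(*   pop   : productions  A f -> r    (r in (N u T)^* )                *)
Record igrammar (N T F : finType) := IGrammar {
  start : N;
  rules : seq (N * seq (N + T));
  push  : seq (N * N * F);
  pop   : seq (N * F * seq (N + T))
}.

Section IndexedGrammars.
Context {N T F : finType}.
Implicit Type G : igrammar N T F.

Definition is_nt_not (S : N) (z : N + T) : bool :=
  if z is inl C then C != S else false.
Definition is_term (z : N + T) : bool := if z is inr _ then true else false.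

Definition grounded_by G (dollar : F) : Prop :=
  let S := start G in
  [/\ all (fun ar => (ar.1 != S) && (ar.2 != [::]) && all (is_nt_not S) ar.2)
          (rules G),
      all (fun abf => let: (A, B, f) := abf in
             ((A == S) && (f == dollar) && (B != S))
          || ((A != S) && (B != S) && (f != dollar))) (push G) &
      all (fun afr => let: (A, f, r) := afr in
             (A != S) &&
             (((f != dollar) && (r != [::]) && all (is_nt_not S) r)
              || ((f == dollar) && all is_term r))) (pop G)].

Definition grounded G : Prop := exists dollar : F, grounded_by G dollar.

(* Derivation trees.  Internal nodes carry a label A x (A in N, x in   *)
(* F^*, top of stack first); leaves carry a label in T^*.               *)
Inductive dtree : Type :=
  | Leaf of seq T
  | Node of N & seq F & seq dtree.

Definition label (t : dtree) : (N * seq F) + seq T :=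
  match t with Leaf s => inr s | Node A x _ => inl (A, x) end.

Definition terms_of (r : seq (N + T)) : seq T :=
  pmap (fun z => if z is inr a then Some a else None) r.

(* A right-hand side consisting only of terminals (e.g. the
   production A$ -> s) yields a single leaf labelled by it; otherwise each
   nonterminal C gives a child C y (and a terminal a a leaf labelled a,
   which never happens in grounded grammars). *)
Definition expand (y : seq F) (r : seq (N + T)) : seq ((N * seq F) + seq T) :=
  if all is_term r then [:: inr (terms_of r)]
  else map (fun z => match z with inl C => inl (C, y) | inr a => inr [:: a] end) r.

Definition step G (A : N) (x : seq F) (cs : seq ((N * seq F) + seq T)) : Prop :=
  (exists r, (A, r) \in rules G /\ cs = expand x r)
  \/ (exists B f, (A, B, f) \in push G /\ cs = [:: inl (B, f :: x)])
  \/ (exists f y r, x = f :: y /\ (A, f, r) \in pop G /\ cs = expand y r).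

(* nodes are addressed by the sequence of child indices from the root *)
Fixpoint subt (t : dtree) (p : seq nat) : option dtree :=
  match p with
  | [::] => Some t
  | i :: p' =>
      match t with
      | Leaf _ => None
      | Node _ _ ch => if i < size ch then subt (nth t ch i) p' else None
      end
  end.

Definition is_internal (t : dtree) (p : seq nat) : Prop :=
  exists A x ch, subt t p = Some (Node A x ch).

Definition derivation_tree G (t : dtree) : Prop :=
  label t = inl (start G, [::]) /\
  forall p A x ch, subt t p = Some (Node A x ch) -> step G A x (map label ch).

Fixpoint ylen (t : dtree) : nat :=
  match t with
  | Leaf s => size s
  | Node _ _ ch => sumn (map ylen ch)
  end.

Fixpoint offset (t : dtree) (p : seq nat) : nat :=
  match p with
  | [::] => 0
  | i :: p' =>
      match t with
      | Leaf _ => 0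
      | Node _ _ ch => sumn (map ylen (take i ch)) + offset (nth t ch i) p'
      end
  end.

Definition leaf_marked (t : dtree) (M : nat -> Prop) (p : seq nat) : Prop :=
  exists s, subt t p = Some (Leaf s) /\
    exists k, k < size s /\ M (offset t p + k).

Definition marked (t : dtree) (M : nat -> Prop) (p : seq nat) : Prop :=
  exists q, leaf_marked t M (p ++ q).

Definition branch_node (t : dtree) (M : nat -> Prop) (p : seq nat) : Prop :=
  exists i j, i <> j /\ marked t M (rcons p i) /\ marked t M (rcons p j).

(* sigma and eta (meaningful on internal nodes) *)
Definition sigma G (t : dtree) (p : seq nat) : N :=
  if subt t p is Some (Node A _ _) then A else start G.
Definition eta (t : dtree) (p : seq nat) : nat :=
  if subt t p is Some (Node _ x _) then size x else 0.

Definition in_scope (t : dtree) (v v' : seq nat) : Prop :=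
  exists q, v' = v ++ q /\
    forall k, k <= size q ->
      is_internal t (v ++ take k q) /\ eta t v <= eta t (v ++ take k q).

Definition in_beta (t : dtree) (v v' : seq nat) : Prop :=
  in_scope t v v' /\ forall i, ~ in_scope t v (rcons v' i).

Definition triple := ({set N} * {set N} * {set N})%type.
Definition inR (tau : triple) : bool :=
  [&& tau.1.1 :&: tau.1.2 == set0, tau.1.1 :&: tau.2 == set0,
      tau.1.2 :&: tau.2 == set0 & tau.1.1 :|: tau.1.2 :|: tau.2 == setT].

Definition tau G (t : dtree) (M : nat -> Prop) (v : seq nat) : triple :=
  ( [set A : N | `[< forall v', in_beta t v v' -> sigma G t v' != A >] ],
    [set A : N | `[< (exists v', in_beta t v v' /\ sigma G t v' = A) /\
                     ~ (exists v', in_beta t v v' /\ marked t M v' /\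
                                   sigma G t v' = A) >] ],
    [set A : N | `[< exists v', in_beta t v v' /\ marked t M v' /\
                               sigma G t v' = A >] ] ).

(* Descents H = (v_0, ..., v_m), given as a nonempty list of addresses *)
Definition vH (H : seq (seq nat)) (i : nat) : seq nat := nth [::] H i.
Definition mH (H : seq (seq nat)) : nat := (size H).-1.

Definition descendant (v w : seq nat) : Prop := exists q, q != [::] /\ w = v ++ q.
Definition child (v w : seq nat) : Prop := exists i, w = rcons v i.

Definition descent (t : dtree) (H : seq (seq nat)) : Prop :=
  [/\ 0 < size H,
      forall i, i <= mH H -> is_internal t (vH H i),
      in_beta t (vH H 0) (vH H (mH H)) &
      forall i, 1 <= i <= mH H -> descendant (vH H i.-1) (vH H i)].

Definition controlled (H : seq (seq nat)) : Prop :=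
  forall i, 1 <= i <= mH H -> child (vH H i.-1) (vH H i).

(* split between i and i+1 *)
Definition split_at (t : dtree) (M : nat -> Prop) (H : seq (seq nat)) (i : nat) : Prop :=
  exists q, vH H i.+1 = vH H i ++ q /\
    exists k, k < size q /\ branch_node t M (vH H i ++ take k q).

Definition nsplits (t : dtree) (M : nat -> Prop) (H : seq (seq nat)) : nat :=
  count (fun i => `[< split_at t M H i >]) (iota 0 (mH H)).

Definition limited G (t : dtree) (M : nat -> Prop) (H : seq (seq nat)) : Prop :=
  forall b1 t1 t2 b2, b1 < t1 -> t1 < t2 -> t2 <= b2 -> b2 <= mH H ->
    sigma G t (vH H b1) = sigma G t (vH H t1) ->
    sigma G t (vH H t2) = sigma G t (vH H b2) ->
    in_beta t (vH H b1) (vH H b2) ->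
    in_beta t (vH H t1) (vH H t2) ->
    tau G t M (vH H b1) = tau G t M (vH H t1) ->
    forall i, (b1 <= i < t1) || (t2 <= i < b2) -> ~ split_at t M H i.

Definition respects G (t : dtree) (M : nat -> Prop) (H : seq (seq nat))
    (W : {set N * N * triple}) : Prop :=
  forall i j, i < j -> j <= mH H -> in_beta t (vH H i) (vH H j) ->
    (sigma G t (vH H i), sigma G t (vH H j), tau G t M (vH H i)) \in W.

End IndexedGrammars.

(* Main.v *)
Require Import Defs.
From mathcomp Require Import all_boot all_order boolp.
From mathcomp Require Import zify.
Set Implicit Arguments. Unset Strict Implicit. Unset Printing Implicit Defensive.

Lemma catI (X : Type) (s a b : seq X) : s ++ a = s ++ b -> a = b.
Proof. by elim: s => //= x s IH [] /IH. Qed.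

Section Gen.
Context {N T F : finType}.
Implicit Types (t : @dtree N T F).

Lemma subt_cat t p q : subt t (p ++ q) = obind (fun u => subt u q) (subt t p).
Proof. elim: p t => [|i p IH] [s|A x ch] //=; case: ifP => // _; exact: IH. Qed.

Lemma subt_rcons t p i : subt t (rcons p i) =
  obind (fun u => if u is Node _ _ ch then
                    (if i < size ch then Some (nth u ch i) else None) else None)
        (subt t p).
Proof.
rewrite -cats1 subt_cat; case: (subt t p) => [[s|A x ch]|] //=.
Qed.

Lemma scope_rcons t v w x : in_scope t v w ->
  (in_scope t v (rcons w x) <->
   is_internal t (rcons w x) /\ eta t v <= eta t (rcons w x)).
Proof.
case=> q [-> Hq]; split.
  case=> q' [E Hq']; have := Hq' (size q') (leqnn _).
  by rewrite take_size -E.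
case=> Hi He; exists (rcons q x); split; first by rewrite rcons_cat.
move=> k; rewrite size_rcons leq_eqVlt ltnS; case/orP=> [/eqP ->|Hk].
  by rewrite -[(size q).+1](size_rcons q x) take_size -rcons_cat.
by rewrite -cats1 takel_cat //; apply: Hq.
Qed.

Lemma expand_inl (y : seq F) (r : seq (N + T)) C z :
  inl (C, z) \in expand y r -> z = y.
Proof.
rewrite /expand; case: ifP => _; first by rewrite mem_seq1.
by case/mapP => [[c|a]] _ // [_ ->].
Qed.

Lemma step_children (G : igrammar N T F) A x (ch : seq (@dtree N T F)) :
  step G A x (map label ch) ->
  exists y : seq F, (forall i B z ch', i < size ch ->
       nth (Leaf [::]) ch i = Node B z ch' -> z = y) /\
     (size y <= size x \/ (size y = (size x).+1 /\ size ch = 1)).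
Proof.
have key : forall y r, map label ch = expand y r -> forall i B z ch', i < size ch ->
       nth (Leaf [::]) ch i = Node B z ch' -> z = y.
  move=> y r E i B z ch' Hi Hn; apply: (@expand_inl y r B).
  have <- : nth (label (Leaf [::])) (map label ch) i = inl (B, z).
    by rewrite (nth_map (Leaf [::])) // Hn.
  by rewrite E mem_nth // -E size_map.
case=> [[r [_ E]]|[[B [f [_ E]]]|[f [y [r [-> [_ E]]]]]]].
- by exists x; split; [exact: key E | left].
- exists (f :: x); split; last by right; rewrite -(size_map label) E.
  move=> i B' z ch' Hi Hn.
  have : nth (label (Leaf [::])) (map label ch) i = inl (B', z).
    by rewrite (nth_map (Leaf [::])) // Hn.
  have Hs : size ch = 1 by rewrite -(size_map label) E.
  by move: Hi; rewrite Hs ltnS leqn0 => /eqP ->; rewrite E /= => -[_ ->].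
- by exists y; split; [exact: key E | left].
Qed.

Lemma marked_lt t (M : nat -> Prop) p i A x ch :
  marked t M (rcons p i) -> subt t p = Some (Node A x ch) -> i < size ch.
Proof.
case=> q [s [Hs _]] Hp; move: Hs; rewrite subt_cat subt_rcons Hp /=.
by case: ifP.
Qed.

End Gen.

Section Code.
Context {N : finType}.
Definition code (t : @triple N) : {ffun N -> 'I_3} :=
  [ffun a => if a \in t.1.1 then ord0 else if a \in t.1.2 then
     (Ordinal (isT : 1 < 3)) else ord_max].

Lemma inR_pt (t : @triple N) a : inR t ->
  [|| (a \in t.1.1) && ~~ (a \in t.1.2) && ~~ (a \in t.2),
      ~~ (a \in t.1.1) && (a \in t.1.2) && ~~ (a \in t.2) |
      ~~ (a \in t.1.1) && ~~ (a \in t.1.2) && (a \in t.2)].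
Proof.
case/and4P => /eqP E12 /eqP E13 /eqP E23 /eqP EU.
have := congr1 (fun S : {set N} => a \in S) E12.
have := congr1 (fun S : {set N} => a \in S) E13.
have := congr1 (fun S : {set N} => a \in S) E23.
have := congr1 (fun S : {set N} => a \in S) EU.
rewrite !inE.
by case: (a \in t.1.1); case: (a \in t.1.2); case: (a \in t.2).
Qed.

Lemma code_inj : {in [pred t : @triple N | inR t] &, injective code}.
Proof.
move=> [[A1 A2] A3] [[B1 B2] B3]; rewrite !inE => HA HB /ffunP Hf.
have K : forall a, [/\ (a \in A1) = (a \in B1), (a \in A2) = (a \in B2) &
                       (a \in A3) = (a \in B3)].
  move=> a; have PA := inR_pt a HA; have PB := inR_pt a HB.
  have Hc := congr1 val (Hf a); rewrite !ffunE /= in Hc PA PB.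
  move: PA PB Hc.
  by case: (a \in A1); case: (a \in A2); case: (a \in A3);
     case: (a \in B1); case: (a \in B2); case: (a \in B3).
congr (_, _, _); apply/setP => a; by case: (K a).
Qed.

Lemma card_R2 : #|[set p : N * @triple N | inR p.2]| <= #|N| * 3 ^ #|N|.
Proof.
have -> : #|N| * 3 ^ #|N| = #|{: N * {ffun N -> 'I_3}}|.
  by rewrite card_prod card_ffun card_ord.
apply: (@leq_card_in _ _ (fun p : N * @triple N => (p.1, code p.2))).
move=> [a t] [b u]; rewrite !inE /= => Ht Hu [-> Ec].
by rewrite (code_inj Ht Hu Ec).
Qed.
End Code.

Section Path.
Variables (N T F : finType) (G : igrammar N T F) (D : @dtree N T F)
  (M : nat -> Prop) (H : seq (seq nat)).
Hypothesis HD : derivation_tree G D.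
Hypothesis Hdesc : descent D H.
Hypothesis Hctl : controlled H.

Local Notation m := (mH H).
Local Notation v := (vH H).
Local Notation e := (fun k => eta D (vH H k)).
Local Notation br := (fun k => branch_node D M (vH H k)).
Definition Ch j b := forall x, is_internal D (rcons (v j) x) -> eta D (rcons (v j) x) < b.

Lemma vchild k : k < m -> exists x, v k.+1 = rcons (v k) x.
Proof. by move=> Hk; case: (Hctl (i:=k.+1)) => [|x ->]; [rewrite ltnS /=; lia|exists x]. Qed.

Lemma vint k : k <= m -> is_internal D (v k).
Proof. by case: Hdesc => _ Hi _ _; apply: Hi. Qed.

Lemma path_q i d : i + d <= m -> exists q, v (i + d) = v i ++ q /\ size q = d /\
   forall k, k <= d -> v i ++ take k q = v (i + k).
Proof.
elim: d => [|d IH] Hd.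
  by exists [::]; rewrite addn0 cats0; split=> //; split=> // k; rewrite leqn0 => /eqP ->; rewrite addn0.
case: IH; first lia.
move=> q [E [Sq Hq]].
case: (vchild (k := i + d)); first lia.
move=> x Ex; exists (rcons q x); split; first by rewrite addnS Ex E rcons_cat.
split; first by rewrite size_rcons Sq.
subst d.
move=> k; rewrite leq_eqVlt ltnS; case/orP=> [/eqP ->|Hk].
  rewrite -[(size q).+1](size_rcons q x) take_size -rcons_cat -E.
  by rewrite size_rcons addnS -Ex.
by rewrite -cats1 takel_cat //; apply: Hq.
Qed.

Lemma scope_iff i j : i <= j <= m ->
  (in_scope D (v i) (v j) <-> (forall k, i <= k <= j -> e i <= e k)).
Proof.
move=> /andP [Hij Hjm].
case: (path_q (i := i) (d := j - i)); first lia.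
move=> q [E [Sq Hq]]; rewrite subnKC // in E.
split.
  case=> q' [E' Hq'] k /andP [Hik Hkj].
  have Eq : q' = q by apply: (@catI _ (v i)); rewrite -E' -E.
  have := Hq' (k - i); rewrite Eq Hq; last lia.
  by rewrite subnKC //; case=> //; rewrite Sq; lia.
move=> He; exists q; split=> // k Hk; rewrite Hq -?Sq //; split.
  by apply: vint; rewrite Sq in Hk; lia.
by apply: He; rewrite Sq in Hk; lia.
Qed.

Lemma beta_iff i j : i <= j <= m ->
  (in_beta D (v i) (v j) <-> (forall k, i <= k <= j -> e i <= e k) /\ Ch j (e i)).
Proof.
move=> Hij; rewrite /in_beta (scope_iff Hij); split.
  case=> He Hn; split=> // x Hx; rewrite ltnNge; apply/negP => Hle.
  by apply: (Hn x); apply/(scope_rcons _ (proj2 (scope_iff Hij) He)).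
case=> He Hc; split=> // x /(scope_rcons _ (proj2 (scope_iff Hij) He)) [Hx Hle].
by have := Hc x Hx; rewrite ltnNge Hle.
Qed.

Lemma node_children k : k < m -> exists y : seq F,
  (forall x, is_internal D (rcons (v k) x) -> eta D (rcons (v k) x) = size y) /\
  (size y <= e k \/ (size y = (e k).+1 /\ ~ br k)).
Proof.
move=> Hk; case: (vint (k := k)); first lia.
move=> A [x [ch Hs]].
case: (step_children (proj2 HD _ _ _ _ Hs)) => y [Hy Hsz].
exists y; split.
  move=> x' [B [z [ch' Hx]]]; move: Hx; rewrite /eta subt_rcons Hs /=.
  case: ifP => // Hi [Hn]; rewrite Hn.
  by rewrite (Hy x' B z ch') // -Hn (set_nth_default (Node A x ch)).
rewrite /eta Hs; case: Hsz => [Hl|[Hl H1]]; [by left | right; split => //].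
case=> i [j [Hij [Hmi Hmj]]].
have := marked_lt Hmi Hs; have := marked_lt Hmj Hs; rewrite H1; lia.
Qed.

Lemma eta_step k : k < m -> e k.+1 <= (e k).+1 /\ (e k.+1 = (e k).+1 -> ~ br k).
Proof.
move=> Hk; case: (node_children Hk) => y [Hy Hs].
case: (vchild Hk) => x Ex.
have Hi : is_internal D (rcons (v k) x) by rewrite -Ex; apply: vint.
have := Hy x Hi; rewrite -Ex /= => ->.
case: Hs => [Hl|[-> Hb]]; split => //; first lia.
move=> E; lia.
Qed.

Lemma sibling k : k < m -> forall x, is_internal D (rcons (v k) x) ->
  eta D (rcons (v k) x) = e k.+1.
Proof.
move=> Hk x' Hx'; case: (node_children Hk) => y [Hy _].
case: (vchild Hk) => x Ex.
have Hi : is_internal D (rcons (v k) x) by rewrite -Ex; apply: vint.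
by rewrite (Hy x' Hx') Ex (Hy x Hi).
Qed.

Lemma split_br i : i < m -> (split_at D M H i <-> br i).
Proof.
move=> Hi; case: (vchild Hi) => x Ex; rewrite /split_at Ex; split.
  case=> q [E [k [Hk Hb]]].
  have Eq : q = [:: x] by apply: (@catI _ (v i)); rewrite -E cats1.
  by move: Hk Hb; rewrite Eq; case: k => [|k] //= _; rewrite cats0.
by move=> Hb; exists [:: x]; split; [rewrite cats1 | exists 0; rewrite cats0].
Qed.

End Path.

Section Main.
Variables (N T F : finType) (G : igrammar N T F) (D : @dtree N T F)
  (M : nat -> Prop) (H : seq (seq nat)) (W : {set N * N * @triple N}).
Hypothesis HD : derivation_tree G D.
Hypothesis Hdesc : descent D H.
Hypothesis Hctl : controlled H.
Hypothesis Hlim : limited G D M H.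
Hypothesis Hresp : respects G D M H W.

Local Notation m := (mH H).
Local Notation v := (vH H).
Local Notation e := (fun k => eta D (vH H k)).
Local Notation br := (fun k => branch_node D M (vH H k)).

Definition sp a b := count (fun i => `[< br i >]) (iota a (b - a)).

Lemma sp_split a c b : a <= c -> c <= b -> sp a b = sp a c + sp c b.
Proof.
move=> Hac Hcb; rewrite /sp -count_cat.
have -> : b - a = (c - a) + (b - c) by lia.
by rewrite iotaD subnKC.
Qed.

Lemma sp_le a b : sp a b <= b - a.
Proof. by rewrite /sp -[X in _ <= X](size_iota a) count_size. Qed.

Lemma sp0 a b : (forall i, a <= i < b -> ~ br i) -> sp a b = 0.
Proof.
move=> Hn; apply/eqP; rewrite -leqn0 leqNgt -has_count; apply/hasP => -[i].
rewrite mem_iota => Hi /asboolP; apply: Hn; lia.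
Qed.

Definition mt i j := [/\ i <= j, j <= m, (forall k, i <= k <= j -> e i <= e k)
  & Ch D H j (e i)].

Definition cls i : N * @triple N := (sigma G D (v i), tau G D M (v i)).
Definition trip i j : N * N * @triple N := (sigma G D (v i), sigma G D (v j), tau G D M (v i)).

Lemma mt_beta i j : mt i j -> in_beta D (v i) (v j).
Proof. by case=> Hij Hjm He Hc; apply/(beta_iff Hdesc Hctl); [lia|]. Qed.

Lemma lim' b1 t1 t2 b2 : b1 < t1 -> t1 < t2 -> t2 <= b2 -> b2 <= m ->
  mt b1 b2 -> mt t1 t2 -> trip b1 b2 = trip t1 t2 ->
  forall i, (b1 <= i < t1) || (t2 <= i < b2) -> ~ br i.
Proof.
move=> H1 H2 H3 H4 Hb Ht Et i Hi Hbr.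
have E1 := congr1 (fun w => w.1.1) Et; have E2 := congr1 (fun w => w.1.2) Et.
have E3 := congr1 snd Et; rewrite /= in E1 E2 E3.
have Hm : i < m by case/orP: Hi; lia.
apply: (Hlim H1 H2 H3 H4 E1 (esym E2) (mt_beta Hb) (mt_beta Ht) E3 Hi).
by apply/(split_br D M Hctl Hm).
Qed.

Lemma uniq_match i j j' : mt i j -> mt i j' -> j = j'.
Proof.
wlog Hjj : j j' / j <= j'.
  move=> Hw H1 H2; case: (leqP j j') => Hl; first exact: Hw.
  by apply/esym/Hw => //; apply: ltnW.
move=> [Hij Hjm He Hc] [Hij' Hjm' He' Hc'].
apply/eqP; rewrite eqn_leq Hjj /=; rewrite leqNgt; apply/negP => Hlt.
case: (vchild Hctl (k := j)); first lia.
move=> x Ex.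
have Hi : is_internal D (rcons (v j) x) by rewrite -Ex; apply: (vint Hdesc); lia.
have := Hc x Hi; rewrite -Ex; have := He' j.+1; lia.
Qed.

Lemma resp' i j : i < j -> mt i j -> trip i j \in W.
Proof. by move=> Hij Hm; apply: Hresp => //; [case: Hm | exact: mt_beta]. Qed.


Lemma seg t1 t2 B l n' :
  mt t1 t2 -> (forall c d, t1 < c -> d <= t2 -> mt c d -> sp c d <= B) ->
  t1 <= l -> l < n' -> n' <= t2 -> e l = e t1 ->
  (forall k, l < k < n' -> e t1 < e k) ->
  (e n' = e t1 \/ (n' = t2 /\ e t1 < e t2)) ->
  sp l n' <= B.+1.
Proof.
move=> Hm HB H1 H2 H3 Hel Hk Hn.
case: (Hm) => Ht12 Ht2m Het Hct.
cbv beta in *.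
case: (ltnP l.+1 n') => Hln; last by have := sp_le l n'; lia.
have Hlm : l < m by lia.
have [Hs1 Hs2] := eta_step M HD Hdesc Hctl Hlm.
cbv beta in Hs1; cbv beta in Hs2.
have He1 : eta D (v l.+1) = (eta D (v l)).+1 by have := Hk l.+1; lia.
have Hnb := Hs2 He1.
have spl : sp l l.+1 = 0.
  by apply: sp0 => i Hi; have -> : i = l by lia.
rewrite (sp_split (c := l.+1)) // spl add0n.
case: Hn => [Hen | [En Het2]].
- rewrite (sp_split (a := l.+1) (c := n'.-1)); [|lia|lia].
  have Hin : sp l.+1 n'.-1 <= B.
    apply: HB; [lia|lia|]; split; [lia|lia| |].
      move=> k Hk'; cbv beta; have := Hk k; lia.
    move=> x Hx; have Hnm : n'.-1 < m by lia.
    rewrite (sibling M HD Hdesc Hctl Hnm Hx); cbv beta.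
    have -> : n'.-1.+1 = n' by lia.
    lia.
  have := sp_le n'.-1 n'; lia.
- subst n'.
  have Hin : sp l.+1 t2 <= B.
    apply: HB; [lia|lia|]; split; [lia|lia| |].
      move=> k Hk'; cbv beta; case: (ltnP k t2) => Hkt.
        have := Hk k; lia.
      have -> : k = t2 by lia.
      lia.
    move=> x Hx; have := Hct x Hx; lia.
  lia.
Qed.

Definition Cset t2 e0 l : {set N * @triple N} :=
  (fun i : 'I_t2 => cls (val i)) @: [set i : 'I_t2 | (l <= i) && (e i == e0)].

Lemma level_ind t1 t2 B : mt t1 t2 ->
  (forall c d, t1 < c -> d <= t2 -> mt c d -> sp c d <= B) ->
  forall d l, t2 - l <= d -> t1 <= l < t2 -> e l = e t1 ->
  sp l t2 <= #|Cset t2 (e t1) l| * B.+1.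
Proof.
move=> Hm HB; case: (Hm) => Ht12 Ht2m Het Hct; cbv beta in *.
have Hlev : forall l, t1 <= l < t2 -> eta D (v l) = eta D (v t1) -> mt l t2.
  move=> l Hl El; split; [lia|lia| |].
    by move=> k Hk; cbv beta; rewrite El; apply: Het; lia.
  by cbv beta; rewrite El.
elim=> [|d IH] l Hd Hl El; first lia.
have Hin : cls l \in Cset t2 (eta D (v t1)) l.
  have Hlt : l < t2 by lia.
  apply/imsetP; exists (Ordinal Hlt) => //.
  by rewrite inE /= leqnn El eqxx.
have Hpos : 0 < #|Cset t2 (eta D (v t1)) l| by apply/card_gt0P; exists (cls l).
case: (boolP [exists i : 'I_t2, (l < i) && (eta D (v i) == eta D (v t1)) && (cls i == cls l)]).
  case/existsP => i /andP [/andP [Hli /eqP Ei] /eqP Ci].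
  have Hi2 : i < t2 := ltn_ord i.
  have Z : sp l i = 0.
    apply: sp0 => k Hk.
    apply: (lim' (b1 := l) (t1 := i) (t2 := t2) (b2 := t2)); try lia.
    - exact: Hlev.
    - by apply: Hlev => //; lia.
    - have E1 := congr1 fst Ci; have E3 := congr1 snd Ci.
      by rewrite /= in E1 E3; rewrite /trip E1 E3.
  rewrite (sp_split (c := i)); [|lia|lia]; rewrite Z add0n.
  apply: leq_trans (IH i _ _ Ei) _; [lia|lia|].
  rewrite leq_mul2r; apply/orP; right; apply: subset_leq_card.
  apply: imsetS; apply/subsetP => j; rewrite !inE => /andP [Hj ->]; rewrite andbT.
  lia.
move=> Hno.
case: (boolP `[< exists n, (l < n) && (n <= t2) && (eta D (v n) == eta D (v t1)) >]).
  move/asboolP => Hex.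
  case: (ex_minnP Hex) => n' /andP [/andP [Hln Hnt] /eqP En] Hmin.
  have Hseg : sp l n' <= B.+1.
    apply: (seg Hm HB) => //; [lia| |by left].
    move=> k Hk; have := Het k; cbv beta.
    have : eta D (v k) != eta D (v t1).
      apply/negP => /eqP Ek; have := Hmin k; rewrite Ek eqxx andbT.
      have -> : (l < k) && (k <= t2) by apply/andP; split; lia.
      move=> /(_ isT); lia.
    move=> /eqP; lia.
  rewrite (sp_split (c := n')); [|lia|lia].
  case: (ltnP n' t2) => Hnt2; last first.
    have -> : sp n' t2 = 0 by have := sp_le n' t2; lia.
    by rewrite addn0; apply: leq_trans Hseg _; rewrite leq_pmull.
  have IHn := IH n' (ltac:(lia)) (ltac:(lia)) En.
  have Hlt : #|Cset t2 (eta D (v t1)) n'| < #|Cset t2 (eta D (v t1)) l|.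
    apply: proper_card; apply/properP; split.
      apply: imsetS; apply/subsetP => j; rewrite !inE => /andP [Hj ->]; rewrite andbT.
      lia.
    exists (cls l) => //; apply/imsetP => -[j]; rewrite inE => /andP [Hj Ej] Cj.
    move/existsP: Hno; apply; exists j; rewrite Ej -Cj eqxx !andbT.
    lia.
  have : #|Cset t2 (eta D (v t1)) n'| * B.+1 + B.+1 <= #|Cset t2 (eta D (v t1)) l| * B.+1.
    by rewrite addnC -mulSn leq_mul2r Hlt orbT.
  lia.
move/asboolP => Hnex.
have Hseg : sp l t2 <= B.+1.
  apply: (seg Hm HB) => //; [lia|lia| |].
    move=> k Hk; have := Het k; cbv beta.
    have : eta D (v k) != eta D (v t1).
      apply/negP => /eqP Ek; apply: Hnex; exists k; rewrite Ek eqxx andbT.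
      apply/andP; split; lia.
    move=> /eqP; lia.
  right; split => //.
  have := Het t2; cbv beta.
  have : eta D (v t2) != eta D (v t1).
    apply/negP => /eqP Ek; apply: Hnex; exists t2; rewrite Ek eqxx andbT leqnn andbT.
    lia.
  move=> /eqP; lia.
by apply: leq_trans Hseg _; rewrite leq_pmull.
Qed.


Hypothesis HW : forall w, w \in W -> inR w.2.

Definition U a b : {set N * N * @triple N} :=
  [set w | `[< exists i j, [/\ a <= i, i < j, j <= b, mt i j & w = trip i j] >]].

Lemma C_card t1 t2 : t1 < t2 -> mt t1 t2 ->
  #|Cset t2 (e t1) t1| <= #|N| * 3 ^ #|N|.
Proof.
move=> Hlt Hm; apply: leq_trans (card_R2 (N := N)).
apply: subset_leq_card; apply/subsetP => c /imsetP [i].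
rewrite inE => /andP [Hi /eqP Ei] ->; rewrite inE.
have Hi2 : i < t2 := ltn_ord i.
case: (Hm) => Ht12 Ht2m Het Hct; cbv beta in *.
have Hmi : mt i t2.
  split; [lia|lia| |].
    by move=> k Hk; cbv beta; rewrite Ei; apply: Het; lia.
  by cbv beta; rewrite Ei.
exact: (HW (resp' Hi2 Hmi)).
Qed.

Lemma mainK (K2 : 2 <= #|N| * 3 ^ #|N|) n : forall a b, mt a b -> #|U a b| <= n ->
  sp a b + #|N| * 3 ^ #|N| <= (#|N| * 3 ^ #|N|) ^ n.+1.
Proof.
set K := #|N| * 3 ^ #|N|.
have KK : forall n, K <= K ^ n.+1.
  by move=> k; rewrite -{1}(expn1 K); apply: leq_pexp2l; lia.
elim: n => [|n IH] a b Hab Hc.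
  case: (Hab) => Hle _ _ _; case: (ltnP a b) => Hlt.
    have : trip a b \in U a b.
      by rewrite inE; apply/asboolP; exists a, b; split.
    move=> Hin; have : 0 < #|U a b| by apply/card_gt0P; exists (trip a b).
    lia.
  have -> : sp a b = 0 by have := sp_le a b; lia.
  by rewrite add0n.
case: (Hab) => Hle Hbm Heab Hcab; case: (ltnP a b) => Hlt; last first.
  have -> : sp a b = 0 by have := sp_le a b; lia.
  by rewrite add0n.
pose P i := (a <= i) && `[< exists j, [/\ i < j, j <= b, mt i j & trip i j = trip a b] >].
have exP : exists i, P i by exists a; rewrite /P leqnn; apply/asboolP; exists b; split.
have ubP : forall i, P i -> i <= b.
  by move=> i /andP [_ /asboolP [j [Hij Hjb _ _]]]; lia.
case: (ex_maxnP exP ubP) => t1 /andP [Hat1 /asboolP [t2 [Ht12 Ht2b Hmt Etr]]] Hmax.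
have Esp : sp a b = sp t1 t2.
  case: (ltnP a t1) => Hat.
    have Hn := lim' Hat Ht12 Ht2b Hbm Hab Hmt (esym Etr).
    rewrite (sp_split (c := t1)); [|lia|lia].
    rewrite (sp_split (a := t1) (c := t2)); [|lia|lia].
    rewrite (sp0 (a := a)) ?(sp0 (a := t2)) ?add0n ?addn0 //.
      by move=> i Hi; apply: Hn; rewrite Hi orbT.
    by move=> i Hi; apply: Hn; rewrite Hi.
  have Ea : t1 = a by lia.
  subst t1; by rewrite (uniq_match Hmt Hab).
pose B := K ^ n.+1 - K.
have HB : forall c d, t1 < c -> d <= t2 -> mt c d -> sp c d <= B.
  move=> c d Hc1 Hd2 Hcd.
  have Hsub : U c d \subset U a b :\ trip a b.
    apply/subsetP => w; rewrite !inE => /asboolP [i [j [Hci Hij Hjd Hmij ->]]].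
    apply/andP; split.
      apply/negP => /eqP Etr'.
      have : P i by rewrite /P; apply/andP; split; [lia|apply/asboolP; exists j; split => //; lia].
      move/Hmax; lia.
    by apply/asboolP; exists i, j; split => //; lia.
  have Hcard : #|U c d| <= n.
    have := subset_leq_card Hsub.
    have Hin : trip a b \in U a b by rewrite inE; apply/asboolP; exists a, b; split.
    rewrite (cardsD1 (trip a b) (U a b)) Hin add1n in Hc.
    by move=> H1; apply: leq_trans H1 _; rewrite -ltnS.
  have := IH c d Hcd Hcard; rewrite /B; lia.
have Hlev := level_ind Hmt HB (d := t2 - t1) (leqnn _) (ltac:(lia)) erefl.
have HC := C_card Ht12 Hmt.
rewrite Esp.
have HKn := KK n.
have Hmul : sp t1 t2 <= K * B.+1.
  apply: leq_trans Hlev _; rewrite leq_mul2r; apply/orP; right; exact: HC.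
rewrite expnS.
have HBK : B + K = K ^ n.+1 by rewrite /B subnK.
rewrite -HBK; nia.
Qed.

End Main.

Theorem lemma4 (N T F : finType) (G : igrammar N T F) (D : @dtree N T F)
    (M : nat -> Prop) (W : {set N * N * triple}) (H : seq (seq nat)) :
  grounded G ->
  derivation_tree G D ->
  (forall k, M k -> k < ylen D) ->
  (forall w, w \in W -> inR w.2) ->
  descent D H -> controlled H -> limited G D M H -> respects G D M H W ->
  nsplits D M H <= (#|N| * 3 ^ #|N|) ^ (#|W| + 1).
Proof.
move=> _ HD _ HW Hdesc Hctl Hlim Hresp.
have K2 : 2 <= #|N| * 3 ^ #|N|.
  have : 0 < #|N| by apply/card_gt0P; exists (start G).
  have : 3 <= 3 ^ #|N|.
    by rewrite -{1}(expn1 3); apply: leq_pexp2l => //; apply/card_gt0P; exists (start G).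
  nia.
have Emt : mt D H 0 (mH H).
  case: (proj1 (beta_iff Hdesc Hctl (i := 0) (j := mH H) (ltac:(by rewrite leq0n leqnn))) ltac:(by case: Hdesc)) => He Hc.
  by split.
have Hsub : U G D M H 0 (mH H) \subset W.
  apply/subsetP => w; rewrite inE => /asboolP [i [j [_ Hij _ Hmij ->]]].
  exact: (resp' Hdesc Hctl Hresp Hij Hmij).
have := mainK HD Hdesc Hctl Hlim Hresp HW K2 Emt (subset_leq_card Hsub).
have -> : nsplits D M H = sp D M H 0 (mH H).
  rewrite /nsplits /sp subn0; apply: eq_in_count => i; rewrite mem_iota add0n => Hi.
  by apply: asbool_equiv_eq; apply: split_br.
rewrite addn1; lia.
Qed.
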